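(* For each $\varepsilon>0$ there exists $y_0=y_0(\varepsilon)>2$ such that for every $y\in[2,y_0]$ and every $R>2$, the function $x\mapsto g_R(x,y)\,x^{-\varepsilon}$ is non-increasing on $(0,\infty)$.
   Context: Let $\xi$ be a nondecreasing $C^2$ function on $[0,\infty)$ with $\xi(x)=(x-1)^3\vee0$ for $x\in[0,3/2]$ and $\xi(x)=1$ for $x\ge2$. For $x\ge0$, $y\ge2$: $\zeta(x,y)=2x+(yx^{y-1}-2x)\xi(x)$. For $R>2$: $g_R(x,y)=\sqrt{(\partial_x\zeta)(x\wedge R,y)}$. *)

(* Defs.v *)
From Stdlib Require Import Reals Lra.
Open Scope R_scope.

Definition zeta (xi : R -> R) (x y : R) : R :=
  2 * x + (y * Rpower x (y - 1) - 2 * x) * xi x.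

(* g_R(x,y) = sqrt( (d_x zeta)(min x R, y) ), where dzeta is the partial derivative
   of zeta in x (characterised in the theorem by derivable_pt_lim). *)
Definition gR (dzeta : R -> R -> R) (Rr x y : R) : R :=
  sqrt (dzeta (Rmin x Rr) y).

(* Main.v *)
Require Import Defs.
From Stdlib Require Import Reals Lra.
Open Scope R_scope.

Lemma dl_eq f x l1 l2 : derivable_pt_lim f x l1 -> l1 = l2 -> derivable_pt_lim f x l2.
Proof. intros H ->; exact H. Qed.
Lemma dplus f g x a b : derivable_pt_lim f x a -> derivable_pt_lim g x b ->
  derivable_pt_lim (fun t => f t + g t) x (a + b).
Proof. intros; exact (derivable_pt_lim_plus f g x a b H H0). Qed.
Lemma dminus f g x a b : derivable_pt_lim f x a -> derivable_pt_lim g x b ->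
  derivable_pt_lim (fun t => f t - g t) x (a - b).
Proof. intros; exact (derivable_pt_lim_minus f g x a b H H0). Qed.
Lemma dmul f g x a b : derivable_pt_lim f x a -> derivable_pt_lim g x b ->
  derivable_pt_lim (fun t => f t * g t) x (a * g x + f x * b).
Proof. intros; exact (derivable_pt_lim_mult f g x a b H H0). Qed.
Lemma dscal c f x a : derivable_pt_lim f x a ->
  derivable_pt_lim (fun t => c * f t) x (c * a).
Proof. intros; exact (derivable_pt_lim_scal f c x a H). Qed.
Lemma did x : derivable_pt_lim (fun t => t) x 1.
Proof. exact (derivable_pt_lim_id x). Qed.
Lemma dcst c x : derivable_pt_lim (fun _ => c) x 0.
Proof. exact (derivable_pt_lim_const c x). Qed.

Lemma deriv_loc_const f l c a b x : a < x < b -> (forall z, a < z < b -> f z = c) ->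
  derivable_pt_lim f x l -> l = 0.
Proof.
  intros Hx Hf Hd.
  assert (H0 : derivable_pt_lim f x 0).
  { apply (derivable_pt_lim_locally_ext (fun _ => c) f x a b 0 Hx).
    intros z Hz; now rewrite Hf. apply dcst. }
  exact (uniqueness_limite f x l 0 Hd H0).
Qed.

Lemma exp_le' a b : a <= b -> exp a <= exp b.
Proof. intros [H|H]; [left; now apply exp_increasing | subst; lra]. Qed.

Lemma ln_ge0 x : 1 <= x -> 0 <= ln x.
Proof.
  intros H. destruct (Rlt_or_le (ln x) 0) as [h|h]; auto.
  exfalso. apply exp_increasing in h. rewrite exp_ln in h by lra. rewrite exp_0 in h. lra.
Qed.

Lemma ln_le' a b : 0 < a -> a <= b -> ln a <= ln b.
Proof. intros Ha [H|H]; [left; now apply ln_increasing | subst; lra]. Qed.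

Lemma ln_le_m1 x : 0 < x -> ln x <= x - 1.
Proof. intros H. pose proof (exp_ineq1_le (ln x)). rewrite exp_ln in H0 by lra. lra. Qed.

Lemma rp_ge1 x e : 1 <= x -> 0 <= e -> 1 <= Rpower x e.
Proof.
  intros Hx He. unfold Rpower. pose proof (ln_ge0 x Hx).
  pose proof (exp_ineq1_le (e * ln x)). nra.
Qed.

Lemma rp_le x e d : 1 <= x <= 2 -> 0 <= e <= d -> d <= 1/2 -> Rpower x e <= 1 + 2*d.
Proof.
  intros Hx He Hd. unfold Rpower.
  pose proof (ln_ge0 x (proj1 Hx)). pose proof (ln_le_m1 x ltac:(lra)).
  assert (e * ln x <= d) by nra.
  apply Rle_trans with (exp d). now apply exp_le'.
  pose proof (exp_ineq1_le (-d)).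
  assert (exp d * exp (-d) = 1) by (rewrite <- exp_plus; replace (d + -d) with 0 by ring; apply exp_0).
  pose proof (exp_pos d). nra.
Qed.

Lemma rp_anti a b e : 0 < a -> a <= b -> e <= 0 -> Rpower b e <= Rpower a e.
Proof.
  intros Ha Hab He. unfold Rpower. apply exp_le'.
  pose proof (ln_le' a b Ha Hab). nra.
Qed.

Lemma rp_succ x e : 0 < x -> Rpower x (e + 1) = x * Rpower x e.
Proof. intros H. rewrite Rpower_plus, Rpower_1 by lra. ring. Qed.

Lemma rp_pred x e : 0 < x -> Rpower x (e - 1) = Rpower x e / x.
Proof.
  intros H. unfold Rminus. rewrite Rpower_plus, Rpower_Ropp, Rpower_1 by lra. field. lra.
Qed.

Lemma rp_pos x e : 0 < Rpower x e.
Proof. unfold Rpower. apply exp_pos. Qed.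

Lemma sqrt_mulp z p : 0 < p -> sqrt z * p = sqrt (z * (p * p)).
Proof.
  intros Hp. destruct (Rle_or_lt 0 z) as [h|h].
  - rewrite sqrt_mult_alt by lra. rewrite sqrt_square by lra. ring.
  - rewrite !sqrt_neg_0 by nra. ring.
Qed.
Lemma arith d M eps y c p xi a b :
  0 < d <= 1/2 -> 1 <= M -> 34*M*d <= 1 -> 72*M*d <= eps ->
  2 <= y <= 2 + d -> 1 <= c <= 2 -> 1 <= p <= 1 + 2*d -> 0 <= xi <= 1 ->
  -M <= a <= M -> -M <= b <= M ->
  y*(y-1)*(y-2)*p*xi + 2*(y*(y-1)*p - 2)*a*c + (y*c*p - 2*c)*b*c
  <= 2*eps*(2 + (y*(y-1)*p - 2)*xi + (y*c*p - 2*c)*a).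
Proof.
  intros Hd HM H34 H72 Hy Hc Hp Hxi Ha Hb.
  set (A := y*(y-1)*p - 2). set (B := y*p - 2).
  assert (Hyy : 2 <= y*(y-1) <= 2 + 3*d + d*d) by nra.
  assert (HA : 0 <= A <= 11*d).
  { unfold A. split. nra.
    assert (y*(y-1)*p <= (2 + 3*d + d*d)*(1+2*d)) by (apply Rmult_le_compat; nra).
    nra. }
  assert (HB : 0 <= B <= 6*d) by (unfold B; split; nra).
  replace (y*c*p - 2*c) with (c*B) by (unfold B; ring).
  fold A.
  assert (T1 : y*(y-1)*(y-2)*p*xi <= 8*d).
  { assert (0 <= y - 2 <= d) by lra.
    assert (y*(y-1)*p <= 8) by (unfold A in HA; lra).
    assert (0 <= y*(y-1)*p) by nra.
    assert (y*(y-1)*p*(y-2) <= 8*d) by nra.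
    assert (y*(y-1)*p*(y-2)*xi <= 8*d) by nra.
    nra. }
  assert (T2 : 2*A*a*c <= 44*d*M).
  { assert (A*a <= A*M) by nra. assert (A*M <= 11*d*M) by nra.
    assert (A*a*c <= 11*d*M*c) by (apply Rmult_le_compat_r; lra).
    assert (11*d*M*c <= 11*d*M*2) by (apply Rmult_le_compat_l; nra). nra. }
  assert (T3 : c*B*b*c <= 24*d*M).
  { assert (B*b <= B*M) by nra. assert (B*M <= 6*d*M) by nra.
    assert (c*c <= 4) by nra.
    assert (0 <= B*M) by nra.
    assert (c*c*(B*b) <= 4*(6*d*M)) by nra. nra. }
  assert (T4 : - 12*d*M <= c*B*a).
  { assert (- (B*M) <= B*a) by nra. assert (B*M <= 6*d*M) by nra.
    assert (0 <= B*M) by nra. nra. }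
  assert (0 <= A*xi) by nra.
  assert (eps > 0) by nra.
  nra.
Qed.

Lemma abs_bound x K : Rabs x <= K -> -K <= x <= K.
Proof. intros H. split_Rabs; lra. Qed.

Lemma rp_sq x e : Rpower x (-e) * Rpower x (-e) = Rpower x (-2*e).
Proof. rewrite <- Rpower_plus. f_equal. ring. Qed.

Theorem mainTheorem19 :
  forall (xi xi1 xi2 : R -> R) (dzeta : R -> R -> R),
    (forall x, derivable_pt_lim xi x (xi1 x)) ->
    (forall x, derivable_pt_lim xi1 x (xi2 x)) ->
    continuity xi2 ->
    (forall a b, 0 <= a -> a <= b -> xi a <= xi b) ->
    (forall x, 0 <= x <= 3/2 -> xi x = Rmax ((x - 1) ^ 3) 0) ->
    (forall x, 2 <= x -> xi x = 1) ->
    (forall x y, 0 < x -> 2 <= y ->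
       derivable_pt_lim (fun t => zeta xi t y) x (dzeta x y)) ->
    forall eps : R, 0 < eps ->
    exists y0 : R, 2 < y0 /\
      forall y Rr : R, 2 <= y <= y0 -> 2 < Rr ->
        forall a b : R, 0 < a -> a <= b ->
          gR dzeta Rr b y * Rpower b (- eps) <= gR dzeta Rr a y * Rpower a (- eps).
Proof.
  intros xi xi1 xi2 dz H1 H2 Hc2 Hmono Hxi0 Hxi2 Hdz eps Heps.
  assert (Z0 : forall z, 0 < z < 1 -> xi z = 0).
  { intros z Hz. rewrite Hxi0 by lra. apply Rmax_right. simpl. assert (0 <= (z-1)*(z-1)) by nra. nra. }
  assert (Z1 : forall z, 0 < z < 1 -> xi1 z = 0).
  { intros z Hz. exact (deriv_loc_const xi (xi1 z) 0 0 1 z Hz Z0 (H1 z)). }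
  assert (Z2 : forall z, 0 < z < 1 -> xi2 z = 0).
  { intros z Hz. exact (deriv_loc_const xi1 (xi2 z) 0 0 1 z Hz Z1 (H2 z)). }
  assert (W1 : forall z, 2 < z -> xi1 z = 0).
  { intros z Hz. apply (deriv_loc_const xi (xi1 z) 1 2 (z+1) z ltac:(lra)).
    intros w Hw; apply Hxi2; lra. apply H1. }
  assert (W2 : forall z, 2 < z -> xi2 z = 0).
  { intros z Hz. apply (deriv_loc_const xi1 (xi2 z) 0 2 (z+1) z ltac:(lra)).
    intros w Hw; apply W1; lra. apply H2. }
  assert (C1 : forall c, continuity_pt (fun x => Rabs (xi1 x)) c).
  { intros c. change (continuity_pt (comp Rabs xi1) c). apply continuity_pt_comp.
    apply derivable_continuous_pt. exists (xi2 c). apply H2. apply Rcontinuity_abs. }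
  assert (C2 : forall c, continuity_pt (fun x => Rabs (xi2 x)) c).
  { intros c. change (continuity_pt (comp Rabs xi2) c). apply continuity_pt_comp.
    apply Hc2. apply Rcontinuity_abs. }
  destruct (continuity_ab_maj (fun x => Rabs (xi1 x)) 1 2 ltac:(lra) (fun c _ => C1 c))
    as [c1 [Hc1 _]].
  destruct (continuity_ab_maj (fun x => Rabs (xi2 x)) 1 2 ltac:(lra) (fun c _ => C2 c))
    as [c2 [Hc2' _]].
  set (M := 1 + Rabs (xi1 c1) + Rabs (xi2 c2)).
  assert (HM : 1 <= M) by (unfold M; pose proof (Rabs_pos (xi1 c1)); pose proof (Rabs_pos (xi2 c2)); lra).
  assert (B1 : forall c, 1 <= c <= 2 -> -M <= xi1 c <= M).
  { intros c Hc. apply abs_bound. pose proof (Hc1 c Hc). simpl in H.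
    unfold M; pose proof (Rabs_pos (xi2 c2)); lra. }
  assert (B2 : forall c, 1 <= c <= 2 -> -M <= xi2 c <= M).
  { intros c Hc. apply abs_bound. pose proof (Hc2' c Hc). simpl in H.
    unfold M; pose proof (Rabs_pos (xi1 c1)); lra. }
  assert (X01 : forall c, 1 <= c <= 2 -> 0 <= xi c <= 1).
  { intros c Hc. assert (xi 1 = 0).
    { rewrite Hxi0 by lra. replace ((1-1)^3) with 0 by ring. apply Rmax_left; lra. }
    pose proof (Hmono 1 c ltac:(lra) ltac:(lra)) as Q1. pose proof (Hmono c 2 ltac:(lra) ltac:(lra)) as Q2.
    rewrite (Hxi2 2) in Q2 by lra. lra. }
  set (d := Rmin (1/2) (Rmin (2*eps) (Rmin (1/(34*M)) (eps/(72*M))))).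
  assert (Hd0 : 0 < d).
  { unfold d. repeat apply Rmin_glb_lt; try lra;
    unfold Rdiv; apply Rmult_lt_0_compat; try lra; apply Rinv_0_lt_compat; lra. }
  assert (Hd1 : d <= 1/2) by apply Rmin_l.
  assert (Hd2 : d <= 2*eps) by (unfold d; eapply Rle_trans; [apply Rmin_r| apply Rmin_l]).
  assert (Hd3 : 34*M*d <= 1).
  { assert (d <= 1/(34*M)) by (unfold d; eapply Rle_trans; [apply Rmin_r|];
      eapply Rle_trans; [apply Rmin_r| apply Rmin_l]).
    apply Rle_trans with (34*M*(1/(34*M))). apply Rmult_le_compat_l; lra.
    right; field; lra. }
  assert (Hd4 : 72*M*d <= eps).
  { assert (d <= eps/(72*M)) by (unfold d; eapply Rle_trans; [apply Rmin_r|];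
      eapply Rle_trans; [apply Rmin_r| apply Rmin_r]).
    apply Rle_trans with (72*M*(eps/(72*M))). apply Rmult_le_compat_l; lra.
    right; field; lra. }
  exists (2 + d). split. lra.
  intros y Rr Hy HR a b Ha Hab.
  assert (HD : forall x, 0 < x -> dz x y =
     2 + (y*(y-1)*Rpower x (y-2) - 2)*xi x + (y*Rpower x (y-1) - 2*x)*xi1 x).
  { intros x Hx. apply (uniqueness_limite (fun t => zeta xi t y) x). apply Hdz; lra.
    unfold zeta. eapply dl_eq.
    - apply dplus. apply dscal. apply did. apply dmul. apply dminus. apply dscal.
      apply derivable_pt_lim_power; lra. apply dscal; apply did. apply H1.
    - replace (y-1-1) with (y-2) by ring. ring. }
  pose (K := fun x => y*(y-1)*(y-2)*Rpower x (y-2)*xi x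
     + 2*(y*(y-1)*Rpower x (y-2) - 2)*xi1 x*x + (y*x*Rpower x (y-2) - 2*x)*xi2 x*x
     - 2*eps*(2 + (y*(y-1)*Rpower x (y-2) - 2)*xi x + (y*x*Rpower x (y-2) - 2*x)*xi1 x)).
  pose (G := fun x =>
     (2 + (y*(y-1)*Rpower x (y-2) - 2)*xi x + (y*Rpower x (y-1) - 2*x)*xi1 x)
       * Rpower x (-2*eps)).
  assert (HG : forall x, 0 < x -> derivable_pt_lim G x (Rpower x (-2*eps) / x * K x)).
  { intros x Hx. unfold G. eapply dl_eq.
    - apply dmul; [| apply derivable_pt_lim_power; lra].
      apply dplus; [apply dplus; [apply dcst | apply dmul; [apply dminus; [apply dscal; apply derivable_pt_lim_power; lra | apply dcst] | apply H1]] | apply dmul; [apply dminus; [apply dscal, derivable_pt_lim_power; lra | apply dscal, did] | apply H2]].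
    - assert (E1: Rpower x (y-1) = x * Rpower x (y-2))
        by (replace (y-1) with ((y-2)+1) by ring; apply rp_succ; lra).
      assert (E2: Rpower x (y-2-1) = Rpower x (y-2)/x) by (apply rp_pred; lra).
      assert (E3: Rpower x (y-1-1) = Rpower x (y-2)) by (f_equal; ring).
      assert (E4: Rpower x (-2*eps-1) = Rpower x (-2*eps)/x) by (apply rp_pred; lra).
      rewrite E2, E3, E4, E1. unfold K. field. lra. }
  assert (HK : forall x, 0 < x -> K x <= 0).
  { intros x Hx. pose proof (rp_pos x (y-2)) as Hp. unfold K.
    destruct (Rlt_or_le x 1) as [h1|h1].
    { rewrite Z0, Z1, Z2 by lra. nra. }
    destruct (Rle_or_lt x 2) as [h2|h2].
    { pose proof (arith d M eps y x (Rpower x (y-2)) (xi x) (xi1 x) (xi2 x)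
        ltac:(lra) HM Hd3 Hd4 ltac:(lra) ltac:(lra)
        ltac:(split; [apply rp_ge1; lra | apply rp_le with (d := d); lra])
        (X01 x ltac:(lra)) (B1 x ltac:(lra)) (B2 x ltac:(lra))). lra. }
    rewrite Hxi2, W1, W2 by lra.
    assert (HQ0 : 0 <= y*(y-1)*Rpower x (y-2)) by (apply Rmult_le_pos; [nra | lra]).
    assert (h : (y-2) - 2*eps <= 0) by lra.
    pose proof (Rmult_le_compat_l _ _ _ HQ0 h) as h3. nra. }
  assert (Fmono : forall u v, 0 < u -> u <= v ->
     dz v y * Rpower v (-2*eps) <= dz u y * Rpower u (-2*eps)).
  { intros u v Hu [Huv|Huv]; [|subst; lra].
    rewrite (HD u), (HD v) by lra.
    destruct (MVT_cor2 G (fun x => Rpower x (-2*eps) / x * K x) u v Huv) as [c [Hc Hc']].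
    { intros c Hc. apply HG. lra. }
    unfold G in Hc.
    assert (Rpower c (-2*eps) / c * K c <= 0).
    { pose proof (rp_pos c (-2*eps)). pose proof (HK c ltac:(lra)).
      assert (0 < Rpower c (-2*eps) / c) by (apply Rdiv_lt_0_compat; lra). nra. }
    nra. }
  unfold gR.
  destruct (Rle_or_lt a Rr) as [h|h].
  - rewrite (Rmin_left a Rr h).
    set (b' := Rmin b Rr).
    assert (Hb' : a <= b' <= b) by (unfold b'; split; [apply Rmin_glb; lra | apply Rmin_l]).
    apply Rle_trans with (sqrt (dz b' y) * Rpower b' (-eps)).
    { apply Rmult_le_compat_l. apply sqrt_pos. apply rp_anti; lra. }
    rewrite !sqrt_mulp by apply rp_pos. rewrite !rp_sq.
    apply sqrt_le_1_alt. apply Fmono; lra.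
  - rewrite (Rmin_right a Rr) by lra. rewrite (Rmin_right b Rr) by lra.
    apply Rmult_le_compat_l. apply sqrt_pos. apply rp_anti; lra.
Qed.
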